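(* Let $G=(S,\Sigma,u,\{A_\sigma\}_{\sigma\in\Sigma},v)$ be a $k$-state GFA over a finite alphabet $\Sigma$ and let $\lambda\in\mathbb R$. Then there exists a one-way PFA $P$ over the same alphabet $\Sigma$ with at most $2k+6$ states such that for every word $w\in\Sigma^\ast$, \[ f_P(w)>\tfrac12 \iff f_G(w)>\lambda. \]
   Context: Let $\Sigma$ be a finite alphabet and $\Sigma^\ast$ the set of finite words over it. A generalized finite automaton (GFA) over $\Sigma$ with $k$ states is a tuple $G=(S,\Sigma,u,\{A_\sigma\}_{\sigma\in\Sigma},v)$ with $|S|=k$, $u\in\mathbb R^{1\times k}$ a row vector, each $A_\sigma\in\mathbb R^{k\times k}$ an arbitrary real matrix, and $v\in\mathbb R^{k\times 1}$ a column vector; for $w=\sigma_1\cdots\sigma_m$ its value is $f_G(w)=uA_{\sigma_1}\cdots A_{\sigma_m}v$ (so $f_G(\varepsilon)=uv$). A one-way PFA (probabilistic finite automaton, end-marker model) over $\Sigma$ is a tuple $P=(S',\Sigma,\pi,\{P_\sigma\}_{\sigma\in\Sigma},P_{\#},F)$, where $S'$ is a finite state set (its number of states is $|S'|$), $\pi$ is an initial probability distribution (row vector) on $S'$, each $P_\sigma$ and $P_\#$ are row-stochastic $|S'|\times|S'|$ matrices, and $F\subseteq S'$. For $w=\sigma_1\cdots\sigma_m$, $f_P(w)=\pi P_{\sigma_1}\cdots P_{\sigma_m}P_\#\mathbf 1_F$, where $\mathbf 1_F$ is the indicator column vector of $F$. *)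

(* Defs.v *)
From HB Require Import structures.
From mathcomp Require Import all_boot all_order all_algebra.
From mathcomp Require Import reals.
Set Implicit Arguments. Unset Strict Implicit. Unset Printing Implicit Defensive.
Import Order.TTheory GRing.Theory Num.Theory.
Local Open Scope ring_scope.

Definition mxword (R : ringType) (Sigma : Type) (n : nat)
  (A : Sigma -> 'M[R]_n) (w : seq Sigma) : 'M[R]_n :=
  foldr (fun s M => A s *m M) 1%:M w.

Record gfa (R : ringType) (Sigma : Type) (k : nat) := GFA {
  gfa_u : 'rV[R]_k;
  gfa_A : Sigma -> 'M[R]_k;
  gfa_v : 'cV[R]_k }.

Definition gfa_fun (R : ringType) (Sigma : Type) (k : nat) (G : gfa R Sigma k)
  (w : seq Sigma) : R :=
  (gfa_u G *m mxword (gfa_A G) w *m gfa_v G) 0 0.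

(* Data of a one-way PFA (end-marker model) with n states 'I_n. *)
Record pfa (R : ringType) (Sigma : Type) (n : nat) := PFA {
  pfa_init : 'rV[R]_n;
  pfa_trans : Sigma -> 'M[R]_n;
  pfa_end : 'M[R]_n;
  pfa_final : {set 'I_n} }.

Definition row_stochastic (R : numDomainType) (m n : nat) (M : 'M[R]_(m, n)) : Prop :=
  (forall i j, 0 <= M i j) /\ (forall i, \sum_j M i j = 1).

Definition is_pfa (R : numDomainType) (Sigma : Type) (n : nat) (P : pfa R Sigma n) : Prop :=
  row_stochastic (pfa_init P) /\
  (forall s, row_stochastic (pfa_trans P s)) /\
  row_stochastic (pfa_end P).

Definition indicator_col (R : ringType) (n : nat) (F : {set 'I_n}) : 'cV[R]_n :=
  \col_i (if i \in F then 1 else 0).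

Definition pfa_fun (R : ringType) (Sigma : Type) (n : nat) (P : pfa R Sigma n)
  (w : seq Sigma) : R :=
  (pfa_init P *m mxword (pfa_trans P) w *m pfa_end P *m indicator_col R (pfa_final P)) 0 0.

(* Main.v *)
Require Import Defs.
From HB Require Import structures.
From mathcomp Require Import all_boot all_order all_algebra.
From mathcomp Require Import reals.
From mathcomp.algebra_tactics Require Import ring lra.
From mathcomp Require Import zify.
Import Order.TTheory GRing.Theory Num.Theory.
Local Open Scope ring_scope.
Set Implicit Arguments. Unset Strict Implicit. Unset Printing Implicit Defensive.

Section Aux.
Variable R : realType.

Definition mnorm a b (M : 'M[R]_(a, b)) : R := \sum_i \sum_j `|M i j|.
Definition ones n : 'cV[R]_n := const_mx 1.
Definition posp a b (M : 'M[R]_(a, b)) := map_mx (fun x => (`|x| + x) / 2) M.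
Definition negp a b (M : 'M[R]_(a, b)) := map_mx (fun x => (`|x| - x) / 2) M.
Definition absm a b (M : 'M[R]_(a, b)) := map_mx (fun x => `|x|) M.

Lemma mnorm_ge0 a b (M : 'M[R]_(a, b)) : 0 <= mnorm M.
Proof. by apply: sumr_ge0 => i _; apply: sumr_ge0 => j _. Qed.

Lemma rowsum_le a b (M : 'M[R]_(a, b)) i : \sum_j `|M i j| <= mnorm M.
Proof.
rewrite /mnorm (bigD1 i) //= lerDl; apply: sumr_ge0 => i' _; apply: sumr_ge0 => j _ //.
Qed.

Lemma entry_le a b (M : 'M[R]_(a, b)) i j : `|M i j| <= mnorm M.
Proof.
apply: le_trans (rowsum_le M i).
by rewrite (bigD1 j) //= lerDl; apply: sumr_ge0 => j' _.
Qed.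

Lemma small_le (x S : R) : 0 <= x <= S -> x * (1 + S)^-1 <= 1.
Proof.
move=> /andP[h0 h1]; have hS : 0 < 1 + S by lra.
by rewrite ler_pdivrMr // mul1r; lra.
Qed.

Lemma rowsumE a b (M : 'M[R]_(a, b)) i : \sum_j M i j = (M *m ones b) i 0.
Proof. by rewrite mxE; apply: eq_bigr => j _; rewrite mxE mulr1. Qed.

Lemma absx (x : R) : 0 <= `|x| + x /\ 0 <= `|x| - x.
Proof. by case: (lerP 0 x) => h; [rewrite ger0_norm | rewrite ltr0_norm]; lra. Qed.

Lemma posp_ge0 a b (M : 'M[R]_(a, b)) i j : 0 <= posp M i j.
Proof. by rewrite mxE; have [h _] := absx (M i j); apply: divr_ge0. Qed.
Lemma negp_ge0 a b (M : 'M[R]_(a, b)) i j : 0 <= negp M i j.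
Proof. by rewrite mxE; have [_ h] := absx (M i j); apply: divr_ge0. Qed.
Lemma posp_negp_sub a b (M : 'M[R]_(a, b)) : posp M - negp M = M.
Proof. by apply/matrixP => i j; rewrite !mxE; field. Qed.
Lemma posp_negp_add a b (M : 'M[R]_(a, b)) : posp M + negp M = absm M.
Proof. by apply/matrixP => i j; rewrite !mxE; field. Qed.

Lemma block_ge0 m1 m2 n1 n2 (A : 'M[R]_(m1, n1)) (B : 'M[R]_(m1, n2))
  (C : 'M[R]_(m2, n1)) (D : 'M[R]_(m2, n2)) :
  (forall i j, 0 <= A i j) -> (forall i j, 0 <= B i j) ->
  (forall i j, 0 <= C i j) -> (forall i j, 0 <= D i j) ->
  forall i j, 0 <= block_mx A B C D i j.
Proof.
move=> hA hB hC hD i j.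
rewrite -(splitK i) -(splitK j); case: (split i) => i'; case: (split j) => j' /=;
  by rewrite ?block_mxEul ?block_mxEur ?block_mxEdl ?block_mxEdr.
Qed.

Lemma col_ge0 m1 m2 n (A : 'M[R]_(m1, n)) (B : 'M[R]_(m2, n)) :
  (forall i j, 0 <= A i j) -> (forall i j, 0 <= B i j) ->
  forall i j, 0 <= col_mx A B i j.
Proof.
move=> hA hB i j.
by rewrite -(splitK i); case: (split i) => i' /=; rewrite ?col_mxEu ?col_mxEd.
Qed.

Lemma row_ge0 m n1 n2 (A : 'M[R]_(m, n1)) (B : 'M[R]_(m, n2)) :
  (forall i j, 0 <= A i j) -> (forall i j, 0 <= B i j) ->
  forall i j, 0 <= row_mx A B i j.
Proof.
move=> hA hB i j.
by rewrite -(splitK j); case: (split j) => j' /=; rewrite ?row_mxEl ?row_mxEr.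
Qed.

Lemma ones_split m1 m2 : ones (m1 + m2) = col_mx (ones m1) (ones m2).
Proof. by rewrite /ones col_mx_const. Qed.

Variable m : nat.
Implicit Type B : 'M[R]_m.

Definition cst B : R := (1 + mnorm B)^-1.
Definition slack B : 'cV[R]_m := ones m - cst B *: (absm B *m ones m).
Definition stoch B : 'M[R]_(1 + (m + m)) :=
  block_mx 1%:M 0 (col_mx (slack B) (slack B))
    (block_mx (cst B *: posp B) (cst B *: negp B) (cst B *: negp B) (cst B *: posp B)).
Definition Emb : 'M[R]_(1 + (m + m), m) := col_mx 0 (col_mx 1%:M (- 1%:M)).

Lemma cst_gt0 B : 0 < cst B.
Proof. by rewrite /cst invr_gt0; have := mnorm_ge0 B; lra. Qed.

Lemma stoch_Emb B : stoch B *m Emb = cst B *: (Emb *m B).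
Proof.
rewrite /stoch /Emb mul_block_col mul_col_mx mul_block_col !mul_col_mx.
rewrite !mulmx0 !mul0mx ?addr0 ?add0r ?mul1mx ?mulmxN ?mulmx1 ?mulNmx ?mul1mx col_mx0 add0r.
rewrite !scale_col_mx scaler0; congr col_mx; congr col_mx.
  by rewrite -scalerBr posp_negp_sub.
by rewrite -scalerBr -opprB posp_negp_sub scalerN.
Qed.

Lemma stoch_ones B : stoch B *m ones (1 + (m + m)) = ones (1 + (m + m)).
Proof.
rewrite !ones_split /stoch mul_block_col !mul_col_mx !mul_row_col.
rewrite mul0mx addr0 mul1mx; congr col_mx.
rewrite add_col_mx -!scalemxAl -!scalerDr -!mulmxDl.
rewrite (addrC (negp B)) posp_negp_add.
have -> : slack B *m ones 1 = slack B.
  by apply/matrixP => i j; rewrite !mxE big_ord1 !mxE mulr1 (ord1 j).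
by rewrite /slack subrK.
Qed.

Lemma row_stoch_of m1 n (M : 'M[R]_(m1, n)) :
  (forall i j, 0 <= M i j) -> M *m ones n = ones m1 -> row_stochastic M.
Proof. by move=> h0 h1; split => // i; rewrite rowsumE h1 mxE. Qed.

Lemma rowabs_ones m1 n (M : 'M[R]_(m1, n)) i j :
  (absm M *m ones n) i j = \sum_k `|M i k|.
Proof. by rewrite mxE; apply: eq_bigr => k _; rewrite !mxE mulr1. Qed.

Lemma slack_ge0 B i j : 0 <= slack B i j.
Proof.
rewrite /slack !mxE.
rewrite (eq_bigr (fun k => `|B i k|)); last by move=> k _; rewrite !mxE mulr1.
rewrite subr_ge0 mulrC /cst; apply: small_le.
by rewrite rowsum_le andbT; apply: sumr_ge0 => k _.
Qed.

Lemma stoch_rs B : row_stochastic (stoch B).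
Proof.
apply: row_stoch_of; last exact: stoch_ones.
apply: block_ge0.
- by move=> i j; rewrite mxE ler0n.
- by move=> i j; rewrite mxE.
- by apply: col_ge0; apply: slack_ge0.
apply: block_ge0 => i j; rewrite mxE; apply: mulr_ge0; 
  rewrite ?(ltW (cst_gt0 B)) ?posp_ge0 ?negp_ge0 //.
Qed.

End Aux.

Section Main.
Variables (R : realType) (Sigma : finType) (k : nat) (G : gfa R Sigma k) (lambda : R).

Local Notation m := (k + 1)%N.
Definition Ap (s : Sigma) : 'M[R]_m := block_mx (gfa_A G s) 0 0 1%:M.
Definition vp : 'cV[R]_m := col_mx (gfa_v G) (const_mx 1).
Definition up : 'rV[R]_m := row_mx (gfa_u G) (const_mx (- lambda)).

Lemma mxword_Ap w : mxword Ap w = block_mx (mxword (gfa_A G) w) 0 0 1%:M.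
Proof.
elim: w => [|s w IH] /=; first by rewrite -scalar_mx_block.
rewrite /mxword /= -/(mxword _ w) IH /Ap mulmx_block.
by rewrite !mulmx0 !mul0mx !addr0 !add0r mul1mx.
Qed.

Lemma fGp w : (up *m mxword Ap w *m vp) 0 0 = gfa_fun G w - lambda.
Proof.
rewrite mxword_Ap /up /vp mul_row_block !mulmx0 !addr0 add0r mulmx1 mul_row_col.
rewrite mxE /gfa_fun; congr (_ + _).
by rewrite mxE big_ord1 !mxE mulr1.
Qed.

Local Notation n := (1 + (m + m))%N.
Definition Pt (s : Sigma) : 'M[R]_n := stoch (Ap s).
Definition delta : R := (1 + mnorm vp)^-1 / 2.
Definition qv : 'cV[R]_n := const_mx (1/2) + delta *: (@Emb R m *m vp).

Lemma delta_gt0 : 0 < delta.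
Proof. by rewrite /delta divr_gt0 // invr_gt0; have := mnorm_ge0 vp; lra. Qed.

Lemma half_ones p : const_mx (1/2) = (1/2 : R) *: ones R p.
Proof. by apply/matrixP => i j; rewrite !mxE mulr1. Qed.

Lemma invariant w : exists2 C, 0 < C &
  mxword Pt w *m qv = const_mx (1/2) + C *: (@Emb R m *m (mxword Ap w *m vp)).
Proof.
elim: w => [|s w [C C0 IH]].
  by exists delta; [exact: delta_gt0 | rewrite /mxword /= !mul1mx].
exists (C * cst (Ap s)); first by rewrite mulr_gt0 // cst_gt0.
rewrite /mxword /= -/(mxword Pt w) -/(mxword Ap w) -mulmxA IH mulmxDr.
rewrite -scalemxAr mulmxA /Pt stoch_Emb half_ones -scalemxAr stoch_ones.
by rewrite -scalemxAl scalerA -!mulmxA.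
Qed.

Definition gam : R := (1 + mnorm up)^-1.
Definition piv : 'rV[R]_n :=
  row_mx (const_mx (1 - gam * \sum_j `|up 0 j|)) (row_mx (gam *: posp up) (gam *: negp up)).

Lemma gam_gt0 : 0 < gam.
Proof. by rewrite /gam invr_gt0; have := mnorm_ge0 up; lra. Qed.

Lemma piv_Emb : piv *m @Emb R m = gam *: up.
Proof.
rewrite /piv /Emb mul_row_col mul_row_col mulmx0 add0r mulmx1 mulmxN mulmx1.
by rewrite -scalerBr posp_negp_sub.
Qed.

Lemma piv_ones : piv *m ones R n = ones R 1.
Proof.
rewrite /piv !ones_split mul_row_col mul_row_col -!scalemxAl -scalerDr -mulmxDl.
rewrite posp_negp_add -ones_split.
apply/matrixP => i j; rewrite (ord1 i) (ord1 j) mxE [X in _ + X]mxE rowabs_ones.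
rewrite !mxE big_ord1 !mxE mulr1; lra.
Qed.

Lemma piv_rs : row_stochastic piv.
Proof.
apply: row_stoch_of; last exact: piv_ones.
apply: row_ge0; last first.
  by apply: row_ge0 => i j; rewrite mxE mulr_ge0 ?(ltW gam_gt0) ?posp_ge0 ?negp_ge0.
move=> i j; rewrite mxE subr_ge0 mulrC /gam; apply: small_le.
by rewrite rowsum_le andbT; apply: sumr_ge0 => l _.
Qed.

Lemma Embv_le i j : `|(@Emb R m *m vp) i j| <= mnorm vp.
Proof.
rewrite /Emb mul_col_mx mul_col_mx mul0mx mul1mx mulNmx mul1mx.
rewrite -(splitK i); case: (split i) => i' /=.
  by rewrite col_mxEu mxE normr0 mnorm_ge0.
rewrite col_mxEd -(splitK i'); case: (split i') => i'' /=.
  by rewrite col_mxEu entry_le.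
by rewrite col_mxEd mxE normrN entry_le.
Qed.

Lemma qv_bound i j : 0 <= qv i j <= 1.
Proof.
rewrite /qv mxE [X in _ + X]mxE mxE.
set x := (@Emb R m *m vp) i j.
have h : `|x| * (1 + mnorm vp)^-1 <= 1.
  by apply: small_le; rewrite normr_ge0 Embv_le.
have hx : `|delta * x| <= 1/2.
  rewrite normrM /delta ger0_norm; last by rewrite divr_ge0 // invr_ge0; have := mnorm_ge0 vp; lra.
  rewrite mulrC mulrA; lra.
move: hx; rewrite ler_norml => /andP[h1 h2]; apply/andP; split; lra.
Qed.

Definition s0 : 'I_n := lshift (m + m) (ord0 : 'I_1).
Definition Pend : 'M[R]_n :=
  \matrix_(i, j) (if j == s0 then qv i 0 else (1 - qv i 0) / (m + m)%:R).
Definition Fset : {set 'I_n} := [set s0].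

Lemma Pend_rs : row_stochastic Pend.
Proof.
split.
  move=> i j; rewrite mxE; have /andP[h1 h2] := qv_bound i 0.
  by case: ifP => _ //; apply: divr_ge0; [lra | exact: ler0n].
move=> i; rewrite big_split_ord /= big_ord1.
rewrite (eq_bigr (fun _ => (1 - qv i 0) / (m + m)%:R)); last first.
  by move=> l _; rewrite mxE /s0 eq_rlshift.
rewrite sumr_const card_ord mxE (ord1 (ord0 : 'I_1)) eqxx /s0.
have hm : (m + m)%:R != 0 :> R by rewrite pnatr_eq0 addn1.
rewrite -[_ *+ (m + m)]mulr_natr; field; apply: lt0r_neq0; have : (0:R) <= k%:R by exact: ler0n.
lra.
Qed.

Lemma Pend_ind : Pend *m indicator_col R Fset = qv.
Proof.
apply/matrixP => i j; rewrite (ord1 j) mxE (bigD1 s0) //= big1; last first.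
  by move=> l /negbTE hl; rewrite !mxE in_set1 hl mulr0.
by rewrite !mxE eqxx in_set1 eqxx mulr1 addr0.
Qed.

Definition PP : pfa R Sigma n := PFA piv Pt Pend Fset.

Lemma PP_ok : is_pfa PP.
Proof. by split; [exact: piv_rs | split; [move=> s; exact: stoch_rs | exact: Pend_rs]]. Qed.

Lemma PP_fun w : 1/2 < pfa_fun PP w <-> lambda < gfa_fun G w.
Proof.
have [C C0 H] := invariant w.
have -> : pfa_fun PP w = 1/2 + C * gam * (gfa_fun G w - lambda).
  rewrite /pfa_fun /= -mulmxA Pend_ind -mulmxA H mulmxDr half_ones -!scalemxAr piv_ones.
  rewrite mulmxA piv_Emb -scalemxAl mulmxA scalerA mxE [X in _ + X]mxE fGp.
  by rewrite !mxE mulr1.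
have a0 : 0 < C * gam by rewrite mulr_gt0 // gam_gt0.
split => h.
  have : 0 < C * gam * (gfa_fun G w - lambda) by lra.
  by rewrite pmulr_rgt0 //; lra.
have h' : 0 < gfa_fun G w - lambda by lra.
have := mulr_gt0 a0 h'; lra.
Qed.

End Main.

Theorem theorem3p2 (R : realType) (Sigma : finType) (k : nat)
  (G : gfa R Sigma k) (lambda : R) :
  exists (n : nat) (P : pfa R Sigma n),
    (n <= 2 * k + 6)%N /\ is_pfa P /\
    forall w : seq Sigma, (1 / 2 < pfa_fun P w) <-> (lambda < gfa_fun G w).
Proof.
exists (1 + ((k + 1) + (k + 1)))%N, (PP G lambda); split; first by rewrite !addnA; lia.
by split; [exact: PP_ok | move=> w; exact: PP_fun].
Qed.
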